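(* For all $n,k\in\mathbb Z$ one has \[ [x^k y^{n-k}]\,(x+y)^n=\binom{n}{k}_w , \] where the coefficient extraction is as described in the context: for $k\ge 0$ it is the coefficient $a_k$ in the expansion $(x+y)^n=\sum_{k\ge 0}a_k\,x^ky^{n-k}$ in $\mathbb C_w[[x,y,y^{-1}]]$, and for $k<0$ it is the coefficient $b_k$ in the expansion $(x+y)^n=\sum_{k\le n}b_k\,x^ky^{n-k}$ in $\mathbb C_w[[x,x^{-1},y]]$.
   Context: Let $(w(s,t))_{s,t\in\mathbb Z}$ be invertible variables commuting with each other. Let $\mathbb C_w[x,x^{-1},y,y^{-1}]$ be the associative unital $\mathbb C$-algebra generated by $x,x^{-1},y,y^{-1}$ and the $w(s,t)^{\pm1}$, subject to $x^{-1}x=xx^{-1}=1$, $y^{-1}y=yy^{-1}=1$, $yx=w(1,1)xy$, $x\,w(s,t)=w(s+1,t)\,x$, $y\,w(s,t)=w(s,t+1)\,y$ for all $s,t\in\mathbb Z$. $\mathbb C_w[[x,y,y^{-1}]]$ (no negative powers of $x$) and $\mathbb C_w[[x,x^{-1},y]]$ (no negative powers of $y$) denote the corresponding formal power series algebras with the same relations, elements being written as sums of terms (coefficient in the weights)$\cdot x^k y^{m}$. For $n<0$, $(x+y)^n$ is expanded in $\mathbb C_w[[x,y,y^{-1}]]$ as $((1+xy^{-1})y)^n$ (geometric series in $xy^{-1}$), and in $\mathbb C_w[[x,x^{-1},y]]$ as $(x(1+x^{-1}y))^n$ (geometric series in $x^{-1}y$). Product convention: for $l,m\in\mathbb Z$,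 $\prod_{j=l}^m A_j=A_lA_{l+1}\cdots A_m$ if $m>l-1$, $=1$ if $m=l-1$, and $=A_{l-1}^{-1}A_{l-2}^{-1}\cdots A_{m+1}^{-1}$ if $m<l-1$. Big weights: $W(s,t)=\prod_{j=1}^t w(s,j)$. The weight-dependent binomial coefficients $\binom{n}{k}_w$, $n,k\in\mathbb Z$, are the unique family with $\binom{n}{0}_w=\binom{n}{n}_w=1$ for all $n\in\mathbb Z$ and, for all $n,k\in\mathbb Z$ with $(n+1,k)\neq(0,0)$, $\binom{n+1}{k}_w=\binom{n}{k}_w+\binom{n}{k-1}_w\,W(k,n+1-k)$. *)

(* Defs.v *)
From mathcomp Require Import all_boot all_order all_algebra.
Set Implicit Arguments. Unset Strict Implicit. Unset Printing Implicit Defensive.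
Import Order.TTheory GRing.Theory Num.Theory.
Local Open Scope ring_scope.

Definition irange (l h : int) : seq int :=
  if h < l then [::] else [seq l + (i%:Z) | i <- iota 0 (`|h - l|%N).+1].

Section WeightedAlgebra.
Variable R : comUnitRingType.

Definition weights := int -> int -> R.

Definition intsum (l h : int) (F : int -> R) : R := \sum_(a <- irange l h) F a.

Definition prodZ (l m : int) (A : int -> R) : R :=
  if l - 1 <= m then \prod_(j <- irange l m) A j
  else \prod_(j <- irange (m + 1) (l - 1)) (A j)^-1.

Definition BigW (w : weights) (s t : int) : R := prodZ 1 t (fun j => w s j).

Definition wbinom_spec (w : weights) (B : int -> int -> R) : Prop :=
  [/\ forall n : int, B n 0 = 1,
      forall n : int, B n n = 1 &
      forall n k : int, (n + 1, k) != (0, 0) ->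
        B (n + 1) k = B n k + B n (k - 1) * BigW w k (n + 1 - k)].

(* Coefficients of the algebra are (Laurent polynomial) expressions in the
   weights, represented as functions of the weight assignment.  Conjugation
   g |-> x^a y^b g y^-b x^-a acts by shifting the weights:
   w(s,t) |-> w(s+a,t+b). *)
Definition shw (a b : int) (w : weights) : weights := fun s t => w (s + a) (t + b).

(* y^b x^c = qcomm b c * x^c y^b in C_w[x,x^-1,y,y^-1]. *)
Definition qcomm (b c : int) (w : weights) : R :=
  prodZ 1 b (fun j => prodZ 1 c (fun i => w i j)).

(* A homogeneous series of total degree sdeg:
     sum_k scf k x^k y^(sdeg - k),
   where k ranges over k >= sbd (in C_w[[x,y,y^-1]]) resp. k <= sbd
   (in C_w[[x,x^-1,y]]). *)
Record ser := Ser { sdeg : int; sbd : int; scf : weights -> int -> R }.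

Definition get1 (s : ser) (w : weights) (k : int) : R :=
  if k < sbd s then 0 else scf s w k.

(* (f x^a y^b)(g x^c y^e) = f (g shifted by (a,b)) (qcomm b c shifted by (a,0)) x^(a+c) y^(b+e) *)
Definition mul1 (s t : ser) : ser :=
  Ser (sdeg s + sdeg t) (sbd s + sbd t) (fun w k =>
    intsum (sbd s) (k - sbd t) (fun a =>
      get1 s w a * get1 t (shw a (sdeg s - a) w) (k - a)
        * qcomm (sdeg s - a) (k - a) (shw a 0 w))).

Definition one1 : ser := Ser 0 0 (fun _ k => (k == 0)%:R).
Definition pow1 (s : ser) (j : nat) : ser := iter j (mul1 s) one1.

Definition xpy1 : ser := Ser 1 0 (fun _ k => ((k == 0) || (k == 1))%:R).
Definition yinv1 : ser := Ser (-1) 0 (fun _ k => (k == 0)%:R).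
Definition xyinv1 : ser := Ser 0 1 (fun _ k => (k == 1)%:R).
(* geometric series (1 + x y^-1)^-1 = sum_j (-1)^j (x y^-1)^j ;
   (x y^-1)^j only has x-exponents >= j, so the sum is finite per coefficient *)
Definition geom1 : ser :=
  Ser 0 0 (fun w k => \sum_(j < (`|k|%N).+1) (-1) ^+ j * get1 (pow1 xyinv1 j) w k).

(* (x+y)^n in C_w[[x,y,y^-1]] : for n < 0, ((1 + x y^-1) y)^n = (y^-1 (1+xy^-1)^-1)^(-n) *)
Definition expand1 (n : int) : ser :=
  if 0 <= n then pow1 xpy1 `|n|%N else pow1 (mul1 yinv1 geom1) `|n|%N.

Definition get2 (s : ser) (w : weights) (k : int) : R :=
  if sbd s < k then 0 else scf s w k.

Definition mul2 (s t : ser) : ser :=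
  Ser (sdeg s + sdeg t) (sbd s + sbd t) (fun w k =>
    intsum (k - sbd t) (sbd s) (fun a =>
      get2 s w a * get2 t (shw a (sdeg s - a) w) (k - a)
        * qcomm (sdeg s - a) (k - a) (shw a 0 w))).

Definition one2 : ser := Ser 0 0 (fun _ k => (k == 0)%:R).
Definition pow2 (s : ser) (j : nat) : ser := iter j (mul2 s) one2.

Definition xpy2 : ser := Ser 1 1 (fun _ k => ((k == 0) || (k == 1))%:R).
Definition xinv2 : ser := Ser (-1) (-1) (fun _ k => (k == -1)%:R).
Definition xinvy2 : ser := Ser 0 (-1) (fun _ k => (k == -1)%:R).
Definition geom2 : ser :=
  Ser 0 0 (fun w k => \sum_(j < (`|k|%N).+1) (-1) ^+ j * get2 (pow2 xinvy2 j) w k).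

(* (x+y)^n in C_w[[x,x^-1,y]] : for n < 0, (x(1+x^-1 y))^n = ((1+x^-1y)^-1 x^-1)^(-n) *)
Definition expand2 (n : int) : ser :=
  if 0 <= n then pow2 xpy2 `|n|%N else pow2 (mul2 geom2 xinv2) `|n|%N.

Definition coeff1 (s : ser) (w : weights) (k m : int) : R :=
  if sdeg s == k + m then get1 s w k else 0.
Definition coeff2 (s : ser) (w : weights) (k m : int) : R :=
  if sdeg s == k + m then get2 s w k else 0.

Definition xycoeff (w : weights) (n k : int) : R :=
  if 0 <= k then coeff1 (expand1 n) w k (n - k)
  else coeff2 (expand2 n) w k (n - k).

End WeightedAlgebra.

(* Main.v *)
Require Import Defs.
From mathcomp Require Import all_boot all_order all_algebra.
From mathcomp Require Import zify ring.
Set Implicit Arguments. Unset Strict Implicit. Unset Printing Implicit Defensive.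
Import Order.TTheory GRing.Theory Num.Theory.
Local Open Scope ring_scope.

Lemma mem_irange l h a : (a \in irange l h) = (l <= a <= h).
Proof.
rewrite /irange; case: ltrP => hl.
  rewrite in_nil; apply/esym/negbTE; apply/negP => /andP [] ha hb. lia.
apply/mapP/idP.
  move=> [i]; rewrite mem_iota => /andP [_ hi] ->. apply/andP; split; lia.
move=> /andP [h1 h2]; exists (`|a - l|%N); last by lia.
rewrite mem_iota; apply/andP; split => //; lia.
Qed.

Lemma irange_uniq l h : uniq (irange l h).
Proof.
rewrite /irange; case: ltrP => // _.
rewrite map_inj_uniq ?iota_uniq //. move=> i j /= E. lia.
Qed.

Lemma big_irange_perm (T : Type) (idx : T) (op : Monoid.com_law idx) (s : seq int) l h (F : int -> T) :
  uniq s -> (forall a, (a \in s) = (l <= a <= h)) ->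
  \big[op/idx]_(a <- irange l h) F a = \big[op/idx]_(a <- s) F a.
Proof.
move=> us hs; apply: perm_big; apply: uniq_perm => //; first exact: irange_uniq.
by move=> a; rewrite mem_irange hs.
Qed.

Section Tools.
Variable R : comUnitRingType.

Lemma intsum_widen l h l' h' (F : int -> R) : l' <= l -> h <= h' ->
  (forall a, ~~ (l <= a <= h) -> F a = 0) -> intsum l' h' F = intsum l h F.
Proof.
move=> hl hh hF; rewrite /intsum (bigID (fun a => l <= a <= h)) /=.
rewrite [X in _ + X]big1_seq ?addr0; last by move=> a /andP [/hF].
rewrite -big_filter; apply/esym/big_irange_perm.
  by rewrite filter_uniq // irange_uniq.
by move=> a; rewrite mem_filter mem_irange; apply/idP/idP => /andP [] *; apply/andP; split => //; lia.
Qed.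

Lemma intsum0 l h (F : int -> R) : (forall a, F a = 0) -> intsum l h F = 0.
Proof. by move=> hF; rewrite /intsum big1. Qed.

Lemma intsum_single l h p (F : int -> R) : l <= p <= h ->
  (forall a, a != p -> F a = 0) -> intsum l h F = F p.
Proof.
move=> hp hF; rewrite /intsum (bigD1_seq p) ?irange_uniq ?mem_irange //=.
by rewrite big1 ?addr0 // => a /hF.
Qed.

Lemma intsumD l h (F G : int -> R) : intsum l h (fun a => F a + G a) = intsum l h F + intsum l h G.
Proof. by rewrite /intsum big_split. Qed.

Lemma intsumMr l h (F : int -> R) c : intsum l h F * c = intsum l h (fun a => F a * c).
Proof. by rewrite /intsum big_distrl. Qed.

Lemma eq_intsum l h (F G : int -> R) : (forall a, F a = G a) -> intsum l h F = intsum l h G.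
Proof. by move=> e; rewrite /intsum; apply: eq_bigr. Qed.

End Tools.


Section Prod.
Variable R : comUnitRingType.
Implicit Types A B : int -> R.

Definition allUf A := forall j, A j \is a GRing.unit.

Lemma prodZ_unit l m A : allUf A -> prodZ l m A \is a GRing.unit.
Proof.
move=> hA; rewrite /prodZ; case: ifP => _;
  apply: (big_ind (fun x => x \is a GRing.unit)); rewrite ?unitr1 //;
  try (by move=> x y; rewrite unitrM => -> ->).
by move=> j _; rewrite unitrV.
Qed.

Lemma prodZ_empty l A : prodZ l (l - 1) A = 1.
Proof.
rewrite /prodZ lexx /irange; case: ltrP => h; first by rewrite big_nil.
lia.
Qed.

Lemma prodZ_step l m A : allUf A -> prodZ l m A = prodZ l (m - 1) A * A m.
Proof.
move=> hA.
have [h|h] := lerP (l - 1) (m - 1).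
  rewrite /prodZ ifT; last by lia. rewrite ifT //.
  rewrite (big_irange_perm _ _ (s := rcons (irange l (m - 1)) m)).
  - by rewrite big_rcons.
  - rewrite rcons_uniq irange_uniq mem_irange andbT; apply/negP => /andP [] *; lia.
  - move=> a; rewrite mem_rcons in_cons mem_irange.
    case: (eqVneq a m) => [->|ne] /=; lia.
rewrite [prodZ l (m - 1) A]/prodZ ifF; last by lia.
have E : irange (m - 1 + 1) (l - 1) = irange m (l - 1) by congr irange; lia.
rewrite E (big_irange_perm _ _ (s := m :: irange (m + 1) (l - 1))).
- rewrite big_cons mulrC mulrA divrr ?mul1r ?hA //.
  rewrite /prodZ; case: ifP => hh //.
  have -> : m = l - 1 by lia.
  rewrite /irange ifT; last lia. rewrite ifT ?big_nil //; lia.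
- rewrite cons_uniq irange_uniq mem_irange andbT; apply/negP => /andP [] *; lia.
- move=> a; rewrite in_cons mem_irange.
  case: (eqVneq a m) => [->|ne] /=; lia.
Qed.

Lemma step_uniq (f g : int -> R) A m0 : allUf A ->
  (forall m, f m = f (m - 1) * A m) -> (forall m, g m = g (m - 1) * A m) ->
  f m0 = g m0 -> forall m, f m = g m.
Proof.
move=> hA hf hg e0.
have up : forall n : nat, f (m0 + n%:Z) = g (m0 + n%:Z).
  elim=> [|n IH]; first by rewrite addr0.
  rewrite hf hg; have -> : m0 + n.+1%:Z - 1 = m0 + n%:Z by lia.
  by rewrite IH.
have dn : forall n : nat, f (m0 - n%:Z) = g (m0 - n%:Z).
  elim=> [|n IH]; first by rewrite subr0.
  have e : forall h : int -> R, (forall m, h m = h (m - 1) * A m) ->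
      h (m0 - n.+1%:Z) = h (m0 - n%:Z) / A (m0 - n%:Z).
    move=> h hh; rewrite [h (m0 - n%:Z)]hh mulrK ?hA //.
    by congr h; lia.
  by rewrite (e f hf) (e g hg) IH.
move=> m; have [hm|hm] := lerP m0 m.
  by have -> : m = m0 + (`|m - m0|%N)%:Z by lia.
by have -> : m = m0 - (`|m - m0|%N)%:Z by lia.
Qed.

Lemma prodZ_congr l l' m m' A B : l = l' -> m = m' -> (forall j, A j = B j) ->
  prodZ l m A = prodZ l' m' B.
Proof.
move=> -> -> e; rewrite /prodZ; case: ifP => _; apply: eq_bigr => j _; by rewrite e.
Qed.

Lemma prodZ_split l p m A : allUf A -> prodZ l m A = prodZ l p A * prodZ (p + 1) m A.
Proof.
move=> hA; apply: (step_uniq (f := fun m => prodZ l m A) (g := fun m => prodZ l p A * prodZ (p + 1) m A) (A := A) (m0 := p)) => //.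
- by move=> k; apply: prodZ_step.
- by move=> k; rewrite [prodZ (p + 1) k A]prodZ_step // mulrA.
- by have := prodZ_empty (p + 1) A; rewrite addrK /= => ->; rewrite mulr1.
Qed.

Lemma prodZ_shift l m b A : allUf A ->
  prodZ l m (fun j => A (j + b)) = prodZ (l + b) (m + b) A.
Proof.
move=> hA; apply: (step_uniq (f := fun m => prodZ l m (fun j => A (j + b))) (g := fun m => prodZ (l + b) (m + b) A) (A := fun j => A (j + b)) (m0 := l - 1)) => //.
- by move=> k; apply: prodZ_step => j; apply: hA.
- move=> k; rewrite prodZ_step //; congr (_ * _); apply: prodZ_congr => //; lia.
- rewrite prodZ_empty; have -> : l - 1 + b = l + b - 1 by lia.
  by rewrite prodZ_empty.
Qed.

Lemma prodZ_M l m A B : allUf A -> allUf B ->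
  prodZ l m (fun j => A j * B j) = prodZ l m A * prodZ l m B.
Proof.
move=> hA hB; apply: (step_uniq (f := fun m => prodZ l m (fun j => A j * B j)) (g := fun m => prodZ l m A * prodZ l m B) (A := fun j => A j * B j) (m0 := l - 1)) => //.
- by move=> j; rewrite unitrM hA hB.
- by move=> k; apply: prodZ_step => j; rewrite unitrM hA hB.
- move=> k; rewrite [prodZ l k A]prodZ_step // [prodZ l k B]prodZ_step //.
  by rewrite -!mulrA; congr (_ * _); rewrite mulrCA.
- by rewrite !prodZ_empty mulr1.
Qed.

Lemma prodZ_1 l m : prodZ l m (fun _ => (1 : R)) = 1.
Proof.
apply: (step_uniq (f := fun m => prodZ l m (fun _ => (1 : R))) (A := fun _ => (1 : R)) (g := fun _ => 1) (m0 := l - 1)) => //.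
- by move=> j; rewrite unitr1.
- by move=> k; apply: prodZ_step => j; rewrite unitr1.
- by move=> k; rewrite mulr1.
- by rewrite prodZ_empty.
Qed.

Lemma prodZ_inv l m A : allUf A ->
  prodZ l m (fun j => (A j)^-1) = (prodZ l m A)^-1.
Proof.
move=> hA; apply: (step_uniq (f := fun m => prodZ l m (fun j => (A j)^-1)) (g := fun m => (prodZ l m A)^-1) (A := fun j => (A j)^-1) (m0 := l - 1)) => //.
- by move=> j; rewrite unitrV hA.
- by move=> k; apply: prodZ_step => j; rewrite unitrV hA.
- move=> k; rewrite [prodZ l k A]prodZ_step // invrM ?hA ?prodZ_unit //.
  by rewrite mulrC.
- by rewrite !prodZ_empty invr1.
Qed.

Lemma prodZ_single l A : allUf A -> prodZ l l A = A l.
Proof. by move=> hA; rewrite prodZ_step // prodZ_empty mul1r. Qed.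

Lemma prodZ_m1 A : allUf A -> prodZ 1 (-1) A = (A 0)^-1.
Proof.
move=> hA; have := prodZ_step 1 0 hA; rewrite prodZ_empty.
move=> /(congr1 (fun x => x / A 0)); rewrite mulrK ?hA // => <-.
by rewrite mul1r.
Qed.

End Prod.


Section Series.
Variable R : comUnitRingType.
Implicit Types (v w : weights R).

Definition allU v := forall (i j : int), v i j \is a GRing.unit.

Lemma allU_shw a b v : allU v -> allU (shw a b v).
Proof. by move=> h i j; apply: h. Qed.

Lemma BigW_unit v s t : allU v -> BigW v s t \is a GRing.unit.
Proof. by move=> h; apply: prodZ_unit => j; apply: h. Qed.

Lemma BigW_shw a b v s t : allU v ->
  BigW (shw a b v) s t = prodZ (1 + b) (t + b) (fun j => v (s + a) j).
Proof. by move=> h; rewrite /BigW /shw prodZ_shift // => j; apply: h. Qed.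

Lemma qcomm_c0 b v : qcomm b 0 v = 1.
Proof.
rewrite /qcomm (@prodZ_congr _ 1 1 b b _ (fun _ => 1)) ?prodZ_1 //.
by move=> j; rewrite (_ : (0 : int) = 1 - 1) // prodZ_empty.
Qed.

Lemma qcomm_b0 c v : qcomm 0 c v = 1.
Proof. by rewrite /qcomm (_ : (0 : int) = 1 - 1) // prodZ_empty. Qed.

Lemma qc_step a b c v : allU v ->
  qcomm b c (shw a 0 v) = qcomm b (c - 1) (shw a 0 v) * BigW v (c + a) b.
Proof.
move=> h; rewrite /qcomm /BigW -prodZ_M; first last.
- by move=> j; apply: h.
- by move=> j; apply: prodZ_unit => i; apply: (allU_shw a 0 h).
apply: prodZ_congr => // j.
rewrite prodZ_step; last by move=> i; apply: (allU_shw a 0 h).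
by rewrite /shw addr0.
Qed.

Lemma qc_m1 b s v : allU v -> qcomm b (-1) (shw s 0 v) = (BigW v s b)^-1.
Proof.
move=> h; rewrite /qcomm /BigW -prodZ_inv; last by move=> j; apply: h.
apply: prodZ_congr => // j.
rewrite prodZ_m1; last by move=> i; apply: (allU_shw s 0 h).
by rewrite /shw add0r addr0.
Qed.

Lemma key_id w e dT a k : allU w ->
  BigW (shw a (e - a) w) (k - a) (dT - (k - a)) * qcomm (e - a) (k - a) (shw a 0 w)
  = qcomm (e - a) (k - 1 - a) (shw a 0 w) * BigW w k (e + dT - k).
Proof.
move=> h; rewrite BigW_shw // qc_step //.
have -> : k - a - 1 = k - 1 - a by ring.
rewrite mulrCA; congr (_ * _).
have hk : allUf (w k) by move=> j; apply: h.
rewrite /BigW (prodZ_split 1 (e - a) (e + dT - k) hk) /=.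
rewrite subrK mulrC; congr (_ * _); apply: prodZ_congr => //; ring.
Qed.

Lemma term_id (gT gS : weights R -> int -> R) e dT a k w (La : R) :
  allU w ->
  (forall v, allU v -> forall k, gT v k = gS v k + gS v (k - 1) * BigW v k (dT - k)) ->
  La * gT (shw a (e - a) w) (k - a) * qcomm (e - a) (k - a) (shw a 0 w)
  = La * gS (shw a (e - a) w) (k - a) * qcomm (e - a) (k - a) (shw a 0 w)
    + La * gS (shw a (e - a) w) (k - 1 - a) * qcomm (e - a) (k - 1 - a) (shw a 0 w)
      * BigW w k (e + dT - k).
Proof.
move=> hw hT; rewrite hT; last exact: allU_shw.
rewrite mulrDr mulrDl; congr (_ + _).
have -> : k - a - 1 = k - 1 - a by ring.
rewrite -!mulrA; congr (_ * (_ * _)).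
by rewrite key_id.
Qed.

End Series.


Section Mul.
Variable R : comUnitRingType.
Implicit Types (v w : weights R) (s t L S T : ser R).

Lemma get1_lt s w k : k < sbd s -> get1 s w k = 0.
Proof. by rewrite /get1 => ->. Qed.
Lemma get1_ge s w k : sbd s <= k -> get1 s w k = scf s w k.
Proof. by rewrite /get1 ltNge => ->. Qed.
Lemma get2_gt s w k : sbd s < k -> get2 s w k = 0.
Proof. by rewrite /get2 => ->. Qed.
Lemma get2_le s w k : k <= sbd s -> get2 s w k = scf s w k.
Proof. by rewrite /get2 ltNge => ->. Qed.

Lemma get1_mul1_wide s t w k lo hi : lo <= sbd s -> k - sbd t <= hi ->
  get1 (mul1 s t) w k = intsum lo hi (fun a => get1 s w a * get1 t (shw a (sdeg s - a) w) (k - a)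
     * qcomm (sdeg s - a) (k - a) (shw a 0 w)).
Proof.
move=> hl hh.
have van : forall a, ~~ (sbd s <= a <= k - sbd t) ->
   get1 s w a * get1 t (shw a (sdeg s - a) w) (k - a) * qcomm (sdeg s - a) (k - a) (shw a 0 w) = 0.
  move=> a ha; have [h1|h1] := ltrP a (sbd s); first by rewrite (@get1_lt s w a) // !mul0r.
  by rewrite (@get1_lt t _ (k - a)) ?mulr0 ?mul0r //; lia.
rewrite {1}/get1 /=; case: ifP => hk.
  by rewrite intsum0 // => a; apply: van; lia.
by rewrite (intsum_widen hl hh).
Qed.

Lemma get2_mul2_wide s t w k lo hi : lo <= k - sbd t -> sbd s <= hi ->
  get2 (mul2 s t) w k = intsum lo hi (fun a => get2 s w a * get2 t (shw a (sdeg s - a) w) (k - a)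
     * qcomm (sdeg s - a) (k - a) (shw a 0 w)).
Proof.
move=> hl hh.
have van : forall a, ~~ (k - sbd t <= a <= sbd s) ->
   get2 s w a * get2 t (shw a (sdeg s - a) w) (k - a) * qcomm (sdeg s - a) (k - a) (shw a 0 w) = 0.
  move=> a ha; have [h1|h1] := ltrP (sbd s) a; first by rewrite (@get2_gt s w a) // !mul0r.
  by rewrite (@get2_gt t _ (k - a)) ?mulr0 ?mul0r //; lia.
rewrite {1}/get2 /=; case: ifP => hk.
  by rewrite intsum0 // => a; apply: van; lia.
by rewrite (intsum_widen hl hh).
Qed.

Lemma transfer1 L S T :
  (forall v, allU v -> forall k, get1 T v k = get1 S v k + get1 S v (k - 1) * BigW v k (sdeg T - k)) ->
  forall w, allU w -> forall k,
  get1 (mul1 L T) w k = get1 (mul1 L S) w k + get1 (mul1 L S) w (k - 1) * BigW w k (sdeg (mul1 L T) - k).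
Proof.
move=> hyp w hw k.
pose hi := k + `|sbd S| + `|sbd T|.
rewrite (get1_mul1_wide _ _ _ (lo := sbd L) (hi := hi)) //; last by rewrite /hi; lia.
rewrite (get1_mul1_wide _ _ _ (lo := sbd L) (hi := hi)) //; last by rewrite /hi; lia.
rewrite (get1_mul1_wide _ _ _ (lo := sbd L) (hi := hi)) //; last by rewrite /hi; lia.
rewrite intsumMr -intsumD; apply: eq_intsum => a /=.
exact: (term_id (gT := fun v k => get1 T v k)).
Qed.

Lemma transfer2 L S T :
  (forall v, allU v -> forall k, get2 T v k = get2 S v k + get2 S v (k - 1) * BigW v k (sdeg T - k)) ->
  forall w, allU w -> forall k,
  get2 (mul2 L T) w k = get2 (mul2 L S) w k + get2 (mul2 L S) w (k - 1) * BigW w k (sdeg (mul2 L T) - k).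
Proof.
move=> hyp w hw k.
pose lo := k - 1 - `|sbd S| - `|sbd T|.
rewrite (get2_mul2_wide _ _ _ (lo := lo) (hi := sbd L)) //; last by rewrite /lo; lia.
rewrite (get2_mul2_wide _ _ _ (lo := lo) (hi := sbd L)) //; last by rewrite /lo; lia.
rewrite (get2_mul2_wide _ _ _ (lo := lo) (hi := sbd L)) //; last by rewrite /lo; lia.
rewrite intsumMr -intsumD; apply: eq_intsum => a /=.
exact: (term_id (gT := fun v k => get2 T v k)).
Qed.

End Mul.


Section Spec.
Variable R : comUnitRingType.
Implicit Types (v w : weights R) (s t L S T : ser R).

Lemma sdeg_pow1 s m : sdeg (pow1 s m) = m%:Z * sdeg s.
Proof. elim: m => [|m IH] /=; first by rewrite mul0r. rewrite IH; lia. Qed.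
Lemma sbd_pow1 s m : sbd (pow1 s m) = m%:Z * sbd s.
Proof. elim: m => [|m IH] /=; first by rewrite mul0r. rewrite IH; lia. Qed.
Lemma sdeg_pow2 s m : sdeg (pow2 s m) = m%:Z * sdeg s.
Proof. elim: m => [|m IH] /=; first by rewrite mul0r. rewrite IH; lia. Qed.
Lemma sbd_pow2 s m : sbd (pow2 s m) = m%:Z * sbd s.
Proof. elim: m => [|m IH] /=; first by rewrite mul0r. rewrite IH; lia. Qed.

Lemma get1_one1 w k : get1 (one1 R) w k = (k == 0)%:R.
Proof.
rewrite /get1 /=; case: (eqVneq k 0) => [->|ne] //.
by case: ifP.
Qed.

Lemma get2_one2 w k : get2 (one2 R) w k = (k == 0)%:R.
Proof.
rewrite /get2 /=; case: (eqVneq k 0) => [->|ne] //.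
by case: ifP.
Qed.

Lemma mul1_one s w k : get1 (mul1 s (one1 R)) w k = get1 s w k.
Proof.
have [h|h] := ltrP k (sbd s).
  by rewrite !get1_lt //= addr0.
rewrite (get1_mul1_wide _ _ _ (lo := sbd s) (hi := k)) //=; last by lia.
rewrite (intsum_single (p := k)); last first.
  by move=> a ha; rewrite get1_one1 subr_eq0 eq_sym (negbTE ha) mulr0 mul0r.
  by lia.
by rewrite get1_one1 subrr qcomm_c0 !mulr1.
Qed.

Lemma mul2_one s w k : get2 (mul2 s (one2 R)) w k = get2 s w k.
Proof.
have [h|h] := ltrP (sbd s) k.
  by rewrite !get2_gt //= addr0.
rewrite (get2_mul2_wide _ _ _ (lo := k) (hi := sbd s)) //=; last by lia.
rewrite (intsum_single (p := k)); last first.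
  by move=> a ha; rewrite get2_one2 subr_eq0 eq_sym (negbTE ha) mulr0 mul0r.
  by lia.
by rewrite get2_one2 subrr qcomm_c0 !mulr1.
Qed.


Lemma BigW_t0 v (i : int) : BigW v i 0 = 1.
Proof. by rewrite /BigW (_ : (0 : int) = 1 - 1) // prodZ_empty. Qed.

Lemma pos1_base v k : allU v ->
  get1 (pow1 (xpy1 R) 1) v k = get1 (pow1 (xpy1 R) 0) v k
    + get1 (pow1 (xpy1 R) 0) v (k - 1) * BigW v k (sdeg (pow1 (xpy1 R) 1) - k).
Proof.
move=> hv; rewrite [pow1 _ 1]/= mul1_one /= !get1_one1 subr_eq0 /get1 /=.
case: (eqVneq k 0) => [->|h0] /=; first by rewrite mul0r addr0.
case: (eqVneq k 1) => [->|h1] /=; first by rewrite addr0 subrr BigW_t0 mulr1 add0r.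
by rewrite mul0r addr0; case: ifP.
Qed.

Lemma pos2_base v k : allU v ->
  get2 (pow2 (xpy2 R) 1) v k = get2 (pow2 (xpy2 R) 0) v k
    + get2 (pow2 (xpy2 R) 0) v (k - 1) * BigW v k (sdeg (pow2 (xpy2 R) 1) - k).
Proof.
move=> hv; rewrite [pow2 _ 1]/= mul2_one /= !get2_one2 subr_eq0 /get2 /=.
case: (eqVneq k 0) => [->|h0] /=; first by rewrite mul0r addr0.
case: (eqVneq k 1) => [->|h1] /=; first by rewrite addr0 subrr BigW_t0 mulr1 add0r.
by rewrite mul0r addr0; case: ifP.
Qed.

Lemma pos1 m : forall v, allU v -> forall k,
  get1 (pow1 (xpy1 R) m.+1) v k = get1 (pow1 (xpy1 R) m) v k
    + get1 (pow1 (xpy1 R) m) v (k - 1) * BigW v k (sdeg (pow1 (xpy1 R) m.+1) - k).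
Proof.
elim: m => [|m IH] v hv k; first exact: pos1_base.
exact: (transfer1 (xpy1 R) IH hv k).
Qed.

Lemma pos2 m : forall v, allU v -> forall k,
  get2 (pow2 (xpy2 R) m.+1) v k = get2 (pow2 (xpy2 R) m) v k
    + get2 (pow2 (xpy2 R) m) v (k - 1) * BigW v k (sdeg (pow2 (xpy2 R) m.+1) - k).
Proof.
elim: m => [|m IH] v hv k; first exact: pos2_base.
exact: (transfer2 (xpy2 R) IH hv k).
Qed.

Definition E1 := mul1 (yinv1 R) (geom1 R).
Definition E2 := mul2 (geom2 R) (xinv2 R).

Lemma neg1_step m :
  (forall v, allU v -> forall k, get1 (pow1 E1 m) v k = get1 (pow1 E1 m.+1) v k
    + get1 (pow1 E1 m.+1) v (k - 1) * BigW v k (sdeg (pow1 E1 m) - k)) ->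
  (forall v, allU v -> forall k, get1 (pow1 E1 m.+1) v k = get1 (pow1 E1 m.+2) v k
    + get1 (pow1 E1 m.+2) v (k - 1) * BigW v k (sdeg (pow1 E1 m.+1) - k)).
Proof. move=> IH v hv k; exact: (transfer1 (E1) IH hv k). Qed.

Lemma neg2_step m :
  (forall v, allU v -> forall k, get2 (pow2 E2 m) v k = get2 (pow2 E2 m.+1) v k
    + get2 (pow2 E2 m.+1) v (k - 1) * BigW v k (sdeg (pow2 E2 m) - k)) ->
  (forall v, allU v -> forall k, get2 (pow2 E2 m.+1) v k = get2 (pow2 E2 m.+2) v k
    + get2 (pow2 E2 m.+2) v (k - 1) * BigW v k (sdeg (pow2 E2 m.+1) - k)).
Proof. move=> IH v hv k; exact: (transfer2 (E2) IH hv k). Qed.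

End Spec.


Section Neg1.
Variable R : comUnitRingType.
Implicit Types (v w : weights R) (s t L S T : ser R).

Fixpoint cX (j : nat) (v : weights R) : R :=
  if j is j'.+1 then cX j' (shw 1 (0 - 1) v) * qcomm (0 - 1) (j'%:Z) (shw 1 0 v) else 1.

Lemma getX1 j : forall v k, get1 (pow1 (xyinv1 R) j) v k = (k == j%:Z)%:R * cX j v.
Proof.
elim: j => [|j IH] v k; first by rewrite get1_one1 mulr1.
have [h|h] := ltrP k (j.+1%:Z).
  rewrite get1_lt; last by rewrite /= sbd_pow1 /=; lia.
  by rewrite (_ : (k == j.+1%:Z) = false) ?mul0r //; lia.
rewrite (get1_mul1_wide _ _ _ (lo := 1) (hi := k)) //=; last by rewrite sbd_pow1 /=; lia.
rewrite (intsum_single (p := 1)); last first.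
  move=> a ha; rewrite /get1 /=; case: ifP => _; first by rewrite !mul0r.
  by rewrite (negbTE ha) !mul0r.
  by lia.
rewrite /get1 [sbd (xyinv1 R)]/= ltxx /= mul1r -/(get1 _ _ _) IH.
case: (eqVneq k j.+1%:Z) => [->|ne].
  rewrite (_ : j.+1%:Z - 1 = j%:Z); last by lia.
  by rewrite eqxx /= !mul1r.
by rewrite (_ : (k - 1 == j%:Z) = false) ?mul0r //; lia.
Qed.

Lemma getG1 v k : get1 (geom1 R) v k = if k < 0 then 0 else (-1) ^+ `|k|%N * cX `|k|%N v.
Proof.
rewrite /get1 /=; case: ifP => // hk.
rewrite big_ord_recr /= big1 ?add0r.
  rewrite getX1 (_ : (k == `|k|%N%:Z) = true) ?mul1r //; lia.
move=> i _; rewrite getX1 (_ : (k == (widen_ord (leqnSn `|k|%N) i)%:Z) = false) ?mul0r ?mulr0 //.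
have := ltn_ord i; rewrite /=; lia.
Qed.

Lemma getE1 v k : get1 (E1 R) v k = get1 (geom1 R) (shw 0 (-1) v) k * qcomm (-1) k (shw 0 0 v).
Proof.
have [h|h] := ltrP k 0.
  by rewrite !get1_lt ?mul0r.
rewrite (get1_mul1_wide _ _ _ (lo := 0) (hi := k)) //=; last by lia.
rewrite (intsum_single (p := 0)); last first.
  move=> a ha; rewrite /get1 /=; case: ifP => _; first by rewrite !mul0r.
  by rewrite (negbTE ha) !mul0r.
  by lia.
by rewrite /get1 /= mul1r !subr0.
Qed.

Lemma cX_rec j : forall v, allU v -> cX j.+1 v = cX j v * BigW v (j.+1%:Z) (- j%:Z).
Proof.
elim: j => [|j IH] v hv.
  by rewrite /= qcomm_c0 oppr0 BigW_t0.
change (cX j.+1 (shw 1 (0 - 1) v) * qcomm (0 - 1) (j.+1%:Z) (shw 1 0 v) =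
  (cX j (shw 1 (0 - 1) v) * qcomm (0 - 1) (j%:Z) (shw 1 0 v)) * BigW v (j.+2%:Z) (- j.+1%:Z)).
rewrite IH; last by move=> ? ?; apply: hv.
rewrite qc_step // -!mulrA; congr (_ * _).
rewrite (_ : j.+1%:Z - 1 = j%:Z); last by lia.
rewrite mulrCA; congr (_ * _).
rewrite BigW_shw //.
have hk : allUf (v (j.+2%:Z)) by move=> i; apply: hv.
rewrite /BigW (prodZ_split 1 (-1) (- j.+1%:Z) hk) mulrC.
congr (_ * _); apply: prodZ_congr; try lia; by move=> i; congr v; lia.
Qed.

Lemma neg1_base v k : allU v ->
  get1 (pow1 (E1 R) 0) v k = get1 (pow1 (E1 R) 1) v k
    + get1 (pow1 (E1 R) 1) v (k - 1) * BigW v k (sdeg (pow1 (E1 R) 0) - k).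
Proof.
move=> hv; rewrite [pow1 _ 1]/= !mul1_one /= get1_one1 !getE1 !getG1.
have [h|h] := ltrP k 0.
  rewrite ifT; last by lia.
  by rewrite (_ : (k == 0) = false) ?mul0r ?addr0 //; lia.
case: (eqVneq k 0) => [e0|ne].
  rewrite ifT; last by lia.
  by rewrite e0 /= qcomm_c0 expr0 !mulr1 !mul0r addr0.
rewrite ifF; last by lia.
have [n ->] : exists n : nat, k = n.+1%:Z by exists (`|k|%N.-1); lia.
rewrite (_ : `|n.+1%:Z|%N = n.+1) // (_ : `|n.+1%:Z - 1|%N = n); last by lia.
rewrite cX_rec; last by move=> ? ?; apply: hv.
rewrite qc_step // !addr0 (_ : n.+1%:Z - 1 = n%:Z); last by lia.
have e : BigW v n.+1 (0 - n.+1%:Z) = BigW (shw 0 (-1) v) n.+1 (- n%:Z) * BigW v n.+1 (-1).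
  rewrite BigW_shw // /BigW.
  have hk : allUf (v (n.+1%:Z)) by move=> i; apply: hv.
  rewrite (prodZ_split 1 (-1) (0 - n.+1%:Z) hk) mulrC.
  congr (_ * _); apply: prodZ_congr; try lia; by move=> i; congr v; lia.
rewrite e exprS (_ : false%:R = 0 :> R) //; ring.
Qed.

Lemma neg1 m : forall v, allU v -> forall k,
  get1 (pow1 (E1 R) m) v k = get1 (pow1 (E1 R) m.+1) v k
    + get1 (pow1 (E1 R) m.+1) v (k - 1) * BigW v k (sdeg (pow1 (E1 R) m) - k).
Proof.
elim: m => [|m IH]; first by move=> v hv k; exact: neg1_base.
exact: neg1_step.
Qed.

End Neg1.


Section Neg2.
Variable R : comUnitRingType.
Implicit Types (v w : weights R) (s t L S T : ser R).

Fixpoint dY (j : nat) (v : weights R) : R :=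
  if j is j'.+1 then dY j' (shw (-1) (0 - -1) v) * qcomm (0 - -1) (- j'%:Z) (shw (-1) 0 v) else 1.

Lemma getY2 j : forall v k, get2 (pow2 (xinvy2 R) j) v k = (k == - j%:Z)%:R * dY j v.
Proof.
elim: j => [|j IH] v k; first by rewrite get2_one2 mulr1.
have [h|h] := ltrP (- j.+1%:Z) k.
  rewrite get2_gt; last by rewrite /= sbd_pow2 /=; lia.
  by rewrite (_ : (k == - j.+1%:Z) = false) ?mul0r //; lia.
rewrite (get2_mul2_wide _ _ _ (lo := k) (hi := -1)) //=; last by rewrite sbd_pow2 /=; lia.
rewrite (intsum_single (p := -1)); last first.
  move=> a ha; rewrite /get2 /=; case: ifP => _; first by rewrite !mul0r.
  by rewrite (negbTE ha) !mul0r.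
  by lia.
rewrite /get2 [sbd (xinvy2 R)]/= ltxx /= mul1r -/(get2 _ _ _) IH.
case: (eqVneq k (- j.+1%:Z)) => [->|ne].
  rewrite (_ : - j.+1%:Z - -1 = - j%:Z); last by lia.
  by rewrite eqxx /= !mul1r.
by rewrite (_ : (k - -1 == - j%:Z) = false) ?mul0r //; lia.
Qed.

Lemma getG2 v k : get2 (geom2 R) v k = if 0 < k then 0 else (-1) ^+ `|k|%N * dY `|k|%N v.
Proof.
rewrite /get2 /=; case: ifP => // hk.
rewrite big_ord_recr /= big1 ?add0r.
  rewrite getY2 (_ : (k == - `|k|%N%:Z) = true) ?mul1r //; lia.
move=> i _; rewrite getY2 (_ : (k == - (widen_ord (leqnSn `|k|%N) i)%:Z) = false) ?mul0r ?mulr0 //.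
have := ltn_ord i; rewrite /=; lia.
Qed.

Lemma getE2 v k : allU v ->
  get2 (E2 R) v k = get2 (geom2 R) v (k + 1) * (BigW v (k + 1) (- (k + 1)))^-1.
Proof.
move=> hv; have [h|h] := ltrP (-1) k.
  rewrite get2_gt; last by rewrite /=; lia.
  by rewrite get2_gt ?mul0r //=; lia.
rewrite (get2_mul2_wide _ _ _ (lo := k + 1) (hi := `|k| + 1)) //=.
rewrite (intsum_single (p := k + 1)); last first.
  move=> a ha; rewrite [get2 (xinv2 R) _ _]/get2 /=; case: ifP => _; first by rewrite !mulr0 !mul0r.
  by rewrite (_ : (k - a == -1) = false) ?mulr0 ?mul0r //; lia.
  by lia.
rewrite [get2 (xinv2 R) _ _]/get2 /= ifF; last by lia.
rewrite (_ : k - (k + 1) = -1); last by lia.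
by rewrite eqxx mulr1 sub0r qc_m1.
Qed.

Lemma inv_help (a b : R) : a \is a GRing.unit -> b \is a GRing.unit -> b^-1 = a * (a * b)^-1.
Proof. by move=> ha hb; rewrite invrM // mulrCA divrr // mulr1. Qed.

Lemma dY_rec j : forall v, allU v -> dY j.+1 v = dY j v * (BigW v (- j%:Z) j%:Z)^-1.
Proof.
elim: j => [|j IH] v hv.
  by rewrite /= oppr0 qcomm_c0 BigW_t0 invr1.
change (dY j.+1 (shw (-1) (0 - -1) v) * qcomm (0 - -1) (- j.+1%:Z) (shw (-1) 0 v) =
  (dY j (shw (-1) (0 - -1) v) * qcomm (0 - -1) (- j%:Z) (shw (-1) 0 v)) * (BigW v (- j.+1%:Z) j.+1%:Z)^-1).
rewrite IH; last by move=> ? ?; apply: hv.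
rewrite [qcomm _ (- j%:Z) _]qc_step // -!mulrA; congr (_ * _).
rewrite (_ : - j%:Z - 1 = - j.+1%:Z); last by lia.
rewrite [X in X = _]mulrC; congr (_ * _).
have hk : allUf (v (- j.+1%:Z)) by move=> i; apply: hv.
have e : BigW v (- j.+1%:Z) j.+1%:Z = BigW v (- j.+1%:Z) (0 - -1) * BigW (shw (-1) (0 - -1) v) (- j%:Z) j%:Z.
  rewrite BigW_shw // /BigW (prodZ_split 1 1 (j.+1%:Z) hk).
  congr (_ * _); apply: prodZ_congr; try lia; by move=> i; congr v; lia.
rewrite e (inv_help (a := BigW v (- j.+1%:Z) (0 - -1))) //; apply: BigW_unit => //.
by move=> ? ?; apply: hv.
Qed.

Lemma neg2_base v k : allU v ->
  get2 (pow2 (E2 R) 0) v k = get2 (pow2 (E2 R) 1) v k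
    + get2 (pow2 (E2 R) 1) v (k - 1) * BigW v k (sdeg (pow2 (E2 R) 0) - k).
Proof.
move=> hv; rewrite [pow2 _ 1]/= !mul2_one /= get2_one2 !getE2 // subrK sub0r mulrVK ?BigW_unit //.
rewrite !getG2.
have [h|h] := ltrP 0 k.
  rewrite ifT; last by lia.
  by rewrite (_ : (k == 0) = false) ?mul0r ?addr0 //; lia.
case: (eqVneq k 0) => [e0|ne].
  rewrite ifT; last by lia.
  by rewrite e0 /= expr0 !mul0r !mul1r add0r.
rewrite ifF; last by lia.
have [n ->] : exists n : nat, k = - n.+1%:Z by exists (`|k|%N.-1); lia.
rewrite (_ : absz (- n.+1%:Z) = n.+1); last by lia.
rewrite (_ : absz (- n.+1%:Z + 1) = n); last by lia.
rewrite (_ : - n.+1%:Z + 1 = - n%:Z); last by lia.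
rewrite (_ : - - n%:Z = n%:Z); last by lia.
rewrite dY_rec // exprS (_ : false%:R = 0 :> R) //; ring.
Qed.

Lemma neg2 m : forall v, allU v -> forall k,
  get2 (pow2 (E2 R) m) v k = get2 (pow2 (E2 R) m.+1) v k
    + get2 (pow2 (E2 R) m.+1) v (k - 1) * BigW v k (sdeg (pow2 (E2 R) m) - k).
Proof.
elim: m => [|m IH]; first by move=> v hv k; exact: neg2_base.
exact: neg2_step.
Qed.

End Neg2.


Section Final.
Variable R : comUnitRingType.
Implicit Types (v w : weights R).

Lemma expand1_pos (m : nat) : expand1 R m%:Z = pow1 (xpy1 R) m.
Proof. by []. Qed.
Lemma expand2_pos (m : nat) : expand2 R m%:Z = pow2 (xpy2 R) m.
Proof. by []. Qed.
Lemma expand1_neg (m : nat) : expand1 R (- m%:Z) = pow1 (E1 R) m.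
Proof.
case: m => [|m]; first by rewrite oppr0.
rewrite /expand1 (_ : (0 <= - m.+1%:Z) = false) ?abszN //; lia.
Qed.
Lemma expand2_neg (m : nat) : expand2 R (- m%:Z) = pow2 (E2 R) m.
Proof.
case: m => [|m]; first by rewrite oppr0.
rewrite /expand2 (_ : (0 <= - m.+1%:Z) = false) ?abszN //; lia.
Qed.

Lemma sdeg_e1 n : sdeg (expand1 R n) = n.
Proof. case: n => m; [rewrite expand1_pos | rewrite NegzE expand1_neg]; rewrite sdeg_pow1 /=; lia. Qed.
Lemma sbd_e1 n : sbd (expand1 R n) = 0.
Proof. case: n => m; [rewrite expand1_pos | rewrite NegzE expand1_neg]; rewrite sbd_pow1 /=; lia. Qed.
Lemma sdeg_e2 n : sdeg (expand2 R n) = n.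
Proof. case: n => m; [rewrite expand2_pos | rewrite NegzE expand2_neg]; rewrite sdeg_pow2 /=; lia. Qed.
Lemma sbd_e2 n : sbd (expand2 R n) = n.
Proof. case: n => m; [rewrite expand2_pos | rewrite NegzE expand2_neg]; rewrite sbd_pow2 /=; lia. Qed.

Lemma rec1 w n k : allU w ->
  get1 (expand1 R (n + 1)) w k = get1 (expand1 R n) w k + get1 (expand1 R n) w (k - 1) * BigW w k (n + 1 - k).
Proof.
move=> hw; case: n => m.
  rewrite (_ : m%:Z + 1 = m.+1%:Z); last by lia.
  by rewrite !expand1_pos pos1 // sdeg_pow1 /= mulr1.
rewrite NegzE (_ : - m.+1%:Z + 1 = - m%:Z); last by lia.
rewrite !expand1_neg neg1 // sdeg_pow1 /=.
by rewrite (_ : m%:Z * (-1 + 0) = - m%:Z) //; lia.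
Qed.

Lemma rec2 w n k : allU w ->
  get2 (expand2 R (n + 1)) w k = get2 (expand2 R n) w k + get2 (expand2 R n) w (k - 1) * BigW w k (n + 1 - k).
Proof.
move=> hw; case: n => m.
  rewrite (_ : m%:Z + 1 = m.+1%:Z); last by lia.
  by rewrite !expand2_pos pos2 // sdeg_pow2 /= mulr1.
rewrite NegzE (_ : - m.+1%:Z + 1 = - m%:Z); last by lia.
rewrite !expand2_neg neg2 // sdeg_pow2 /=.
by rewrite (_ : m%:Z * (0 + -1) = - m%:Z) //; lia.
Qed.

Lemma xyE w n k : xycoeff w n k = if 0 <= k then get1 (expand1 R n) w k else get2 (expand2 R n) w k.
Proof.
rewrite /xycoeff /coeff1 /coeff2 sdeg_e1 sdeg_e2.
by rewrite (_ : (n == k + (n - k)) = true) //; lia.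
Qed.

End Final.


Section Main.
Variable R : comUnitRingType.
Variable w : weights R.
Hypothesis hw : allU w.

Let C1 n k := get1 (expand1 R n) w k.
Let C2 n k := get2 (expand2 R n) w k.

Lemma int_ind2 (P : int -> Prop) m0 : P m0 -> (forall m, P m -> P (m + 1)) ->
  (forall m, P (m + 1) -> P m) -> forall m, P m.
Proof.
move=> h0 hu hd.
have up : forall n : nat, P (m0 + n%:Z).
  elim=> [|n IH]; first by rewrite addr0.
  by rewrite (_ : m0 + n.+1%:Z = m0 + n%:Z + 1); [apply: hu | lia].
have dn : forall n : nat, P (m0 - n%:Z).
  elim=> [|n IH]; first by rewrite subr0.
  by apply: hd; rewrite (_ : m0 - n.+1%:Z + 1 = m0 - n%:Z) //; lia.
move=> m; have [h|h] := lerP m0 m.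
  by have -> : m = m0 + (`|m - m0|%N)%:Z by lia.
by have -> : m = m0 - (`|m - m0|%N)%:Z by lia.
Qed.

Lemma C1_neg n k : k < 0 -> C1 n k = 0.
Proof. by move=> h; rewrite /C1 get1_lt // sbd_e1. Qed.
Lemma C2_gt n k : n < k -> C2 n k = 0.
Proof. by move=> h; rewrite /C2 get2_gt // sbd_e2. Qed.
Lemma C1_0 k : C1 0 k = (k == 0)%:R.
Proof. by rewrite /C1 (expand1_pos R 0) get1_one1. Qed.
Lemma C2_0 k : C2 0 k = (k == 0)%:R.
Proof. by rewrite /C2 (expand2_pos R 0) get2_one2. Qed.

Lemma C1_n0 n : C1 n 0 = 1.
Proof.
move: n; apply: (int_ind2 (P := fun n => C1 n 0 = 1) (m0 := 0)) => [|m IH|m IH]; first by rewrite C1_0.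
  by rewrite /C1 rec1 // -/(C1 _ _) -/(C1 _ _) IH [C1 m (0 - 1)]C1_neg ?mul0r ?addr0.
by move: IH; rewrite /C1 rec1 // -/(C1 _ _) -/(C1 _ _) [C1 m (0 - 1)]C1_neg ?mul0r ?addr0.
Qed.

Lemma C1_above (n : nat) k : n%:Z < k -> C1 n k = 0.
Proof.
elim: n k => [|n IH] k hk; first by rewrite C1_0 (_ : (k == 0) = false) //; lia.
rewrite (_ : n.+1%:Z = n%:Z + 1); last by lia. rewrite /C1 rec1 // -/(C1 _ _) -/(C1 _ _).
by rewrite !IH ?mul0r ?addr0 //; lia.
Qed.

Lemma C1_nn (n : nat) : C1 n n = 1.
Proof.
elim: n => [|n IH]; first by rewrite C1_0.
rewrite (_ : n.+1%:Z = n%:Z + 1); last by lia. rewrite /C1 rec1 // -/(C1 _ _) -/(C1 _ _).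
rewrite C1_above ?add0r; last by lia.
by rewrite addrK IH (_ : n%:Z + 1 - (n%:Z + 1) = 0) ?BigW_t0 ?mulr1 //; lia.
Qed.

Lemma C2_nn n : C2 n n = 1.
Proof.
move: n; apply: (int_ind2 (P := fun n => C2 n n = 1) (m0 := 0)) => [|m IH|m IH]; first by rewrite C2_0.
  rewrite /C2 rec2 // -/(C2 _ _) -/(C2 _ _) C2_gt ?add0r; last by lia.
  by rewrite addrK IH subrr BigW_t0 mulr1.
move: IH; rewrite /C2 rec2 // -/(C2 _ _) -/(C2 _ _) C2_gt ?add0r; last by lia.
by rewrite addrK subrr BigW_t0 mulr1.
Qed.

Lemma C2_below (n : nat) k : k < 0 -> C2 n k = 0.
Proof.
elim: n k => [|n IH] k hk; first by rewrite C2_0 (_ : (k == 0) = false) //; lia.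
rewrite (_ : n.+1%:Z = n%:Z + 1); last by lia. rewrite /C2 rec2 // -/(C2 _ _) -/(C2 _ _).
by rewrite !IH ?mul0r ?addr0 //; lia.
Qed.

Lemma xy_spec : wbinom_spec w (xycoeff w).
Proof.
split.
- by move=> n; rewrite xyE lexx; exact: C1_n0.
- move=> n; rewrite xyE; have [h|h] := lerP 0 n => /=.
    have [m ->] : exists m : nat, n = m%:Z by exists `|n|%N; lia.
    exact: C1_nn.
  exact: C2_nn.
- move=> n k; rewrite xpair_eqE => hne; rewrite !xyE.
  have [hk|hk] := ltrP 0 k.
    rewrite ifT; last by lia. rewrite ifT; last by lia. rewrite ifT; last by lia.
    exact: rec1.
  case: (eqVneq k 0) => [e0|ne].
    rewrite e0 lexx /= -/(C1 _ _) -/(C1 _ _) !C1_n0.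
    have [hn|hn] := ltrP n (-1).
      by rewrite get2_gt ?mul0r ?addr0 // sbd_e2; lia.
    have [m ->] : exists m : nat, n = m%:Z.
      by exists `|n|%N; move: hne; rewrite e0 eqxx andbT; lia.
    have hz : get2 (expand2 R m) w (0 - 1) = 0 by apply: (C2_below m); lia.
    by rewrite hz mul0r addr0.
  rewrite ifF; last by lia. rewrite ifF; last by lia. rewrite ifF; last by lia.
  exact: rec2.
Qed.

End Main.


Section Uniq.
Variable R : comUnitRingType.
Variable w : weights R.
Hypothesis hw : allU w.
Variable D : int -> int -> R.
Hypothesis D0 : forall n, D n 0 = 0.
Hypothesis Dn : forall n, D n n = 0.
Hypothesis Drec : forall n k : int, (n + 1, k) != (0, 0) ->
  D (n + 1) k = D n k + D n (k - 1) * BigW w k (n + 1 - k).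

Lemma pne (n k : int) : (n + 1 != 0) || (k != 0) -> (n + 1, k) != (0, 0).
Proof. by rewrite xpair_eqE negb_and. Qed.

Lemma zero_unit (x : R) s t : x * BigW w s t = 0 -> x = 0.
Proof.
move=> h; rewrite -(mulrK (BigW_unit s t hw) x) h mul0r //.
Qed.

Lemma DrecL (n k : int) : (n + 1 != 0) || (k != 0) ->
  D (n + 1) k = D n k + D n (k - 1) * BigW w k (n + 1 - k).
Proof. by move=> h; apply: Drec; rewrite xpair_eqE negb_and. Qed.

Lemma s1 m : m != -1 -> D m (m + 1) = 0.
Proof.
move=> hm; have c : (m + 1 != 0) || (m + 1 != 0) by apply/orP; left; lia.
have := DrecL c; rewrite Dn addrK Dn mul0r addr0.
by move=> <-.
Qed.

Lemma s2 m : m != -1 -> D m (-1) = 0.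
Proof.
move=> hm; have c : (m + 1 != 0) || ((0:int) != 0) by apply/orP; left; lia.
have := DrecL c; rewrite !D0 add0r.
by move=> /esym /zero_unit.
Qed.

Lemma s3 (d : nat) : forall n : nat, D n (n%:Z + d.+1%:Z) = 0.
Proof.
elim: d => [|d IH] n.
  by apply: s1; lia.
have c : (n%:Z + 1 != 0) || (n%:Z + d.+2%:Z != 0) by apply/orP; left; lia.
have := DrecL c.
have -> : n%:Z + 1 = n.+1%:Z by lia.
have -> : n%:Z + d.+2%:Z = n.+1%:Z + d.+1%:Z by lia.
rewrite IH.
have -> : n.+1%:Z + d.+1%:Z - 1 = n%:Z + d.+1%:Z by lia.
by rewrite IH mul0r addr0 => <-.
Qed.

Lemma s4 (d : nat) : forall n : nat, D n (- d.+1%:Z) = 0.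
Proof.
elim: d => [|d IH] n.
  by apply: s2; lia.
have c : (n%:Z + 1 != 0) || (- d.+1%:Z != 0) by apply/orP; right; lia.
have := DrecL c.
rewrite IH (_ : n%:Z + 1 = n.+1%:Z); last by lia.
rewrite IH add0r (_ : - d.+1%:Z - 1 = - d.+2%:Z); last by lia.
by move=> /esym /zero_unit.
Qed.

Lemma s6 (n : nat) k : D n k = 0.
Proof.
elim: n k => [|n IH] k.
  have [h|h] := ltrP 0 k.
    have [d ->] : exists d : nat, k = 0%:Z + d.+1%:Z by exists (`|k|%N.-1); lia.
    exact: s3.
  case: (eqVneq k 0) => [->|ne]; first exact: D0.
  have [d ->] : exists d : nat, k = - d.+1%:Z by exists (`|k|%N.-1); lia.
  exact: s4.
have c : (n%:Z + 1 != 0) || (k != 0) by apply/orP; left; lia.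
have := DrecL c.
by rewrite !IH mul0r addr0 (_ : n%:Z + 1 = n.+1%:Z) //; lia.
Qed.

Lemma s7 (m : nat) k : D (- m%:Z) k = 0.
Proof.
elim: m k => [|m IH] k; first by rewrite oppr0 (s6 0).
set n := - m.+1%:Z.
have up : forall j : nat, D n (n + j%:Z) = 0.
  elim=> [|j IHj]; first by rewrite addr0 Dn.
  case: (eqVneq (n + j%:Z + 1) 0) => [e|ne].
    by rewrite (_ : n + j.+1%:Z = 0) ?D0 //; lia.
  have c : (n + 1 != 0) || (n + j%:Z + 1 != 0) by apply/orP; right.
  have := DrecL c.
  rewrite (_ : n + 1 = - m%:Z); last by rewrite /n; lia.
  rewrite IH addrK IHj mul0r addr0 (_ : n + j%:Z + 1 = n + j.+1%:Z); last by lia.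
  by move=> <-.
have dn : forall j : nat, D n (n - j%:Z) = 0.
  elim=> [|j IHj]; first by rewrite subr0 Dn.
  have c : (n + 1 != 0) || (n - j%:Z != 0) by apply/orP; right; rewrite /n; lia.
  have := DrecL c.
  rewrite (_ : n + 1 = - m%:Z); last by rewrite /n; lia.
  rewrite IH IHj add0r (_ : n - j%:Z - 1 = n - j.+1%:Z); last by lia.
  by move=> /esym /zero_unit.
have [h|h] := lerP n k.
  by have -> : k = n + (`|k - n|%N)%:Z by lia.
by have -> : k = n - (`|k - n|%N)%:Z by lia.
Qed.

Lemma hom_zero n k : D n k = 0.
Proof.
have [h|h] := lerP 0 n.
  have [m ->] : exists m : nat, n = m%:Z by exists `|n|%N; lia.
  exact: s6.
have [m ->] : exists m : nat, n = - m%:Z by exists `|n|%N; lia.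
exact: s7.
Qed.

End Uniq.

Lemma wb_uniq (R : comUnitRingType) (w : weights R) (B1 B2 : int -> int -> R) :
  allU w -> wbinom_spec w B1 -> wbinom_spec w B2 -> forall n k, B1 n k = B2 n k.
Proof.
move=> hw [h10 h1n h1r] [h20 h2n h2r] n k; apply/eqP; rewrite -subr_eq0; apply/eqP.
apply: (@hom_zero R w hw (fun n k => B1 n k - B2 n k)) => //.
- by move=> m; rewrite h10 h20 subrr.
- by move=> m; rewrite h1n h2n subrr.
- move=> m j hne; rewrite h1r // h2r //; ring.
Qed.


Theorem theorem7 (R : comUnitRingType) (w : int -> int -> R)
    (hw : forall s t : int, w s t \is a GRing.unit) :
  (exists B : int -> int -> R, wbinom_spec w B) /\
  (forall B : int -> int -> R, wbinom_spec w B ->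
     forall n k : int, xycoeff w n k = B n k).
Proof.
have hw' : allU w by [].
split; first by exists (xycoeff w); exact: xy_spec.
move=> B hB n k; exact: (wb_uniq hw' (xy_spec hw') hB).
Qed.
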